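(* If $n\ge3$ is an odd integer, then $\lambda(\mathbb{Z}/n\mathbb{Z})=\frac1n\log2$.
   Context: For a compact abelian group $G$ with normalized Haar measure $\mu$ and (multiplicative) dual group of characters $\widehat{G}$, let $\mathbb{Z}[\widehat{G}]$ denote the ring of integral linear combinations of characters, regarded as functions on $G$. For $f\in\mathbb{Z}[\widehat{G}]$, the logarithmic Mahler measure over $G$ is $\mathsf{m}_G(f)=\int_G\log|f|\,d\mu$ (with $\log 0=-\infty$). The Lehmer constant of $G$ is $\lambda(G)=\inf\{\mathsf{m}_G(f): f\in\mathbb{Z}[\widehat{G}],\ \mathsf{m}_G(f)>0\}$. Here $\mathbb{Z}/n\mathbb{Z}$ is the finite cyclic group with the uniform probability measure; its characters are $\chi_k(j)=e^{2\pi i jk/n}$, $k=0,\dots,n-1$. *)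

(* Defs.v *)
From HB Require Import structures.
From mathcomp Require Import all_boot all_order all_algebra.
From mathcomp Require Import all_classical all_reals all_analysis.
From mathcomp Require Import complex.
Set Implicit Arguments. Unset Strict Implicit. Unset Printing Implicit Defensive.
Import Order.TTheory GRing.Theory Num.Theory.
Local Open Scope ring_scope.

Section Lehmer.
Variable R : realType.

Definition chi (n : nat) (k j : 'I_n) : R[i] :=
  (cos (2 * pi * (j * k)%:R / n%:R) +i* sin (2 * pi * (j * k)%:R / n%:R))%C.

(* An element f = sum_k c_k chi_k of Z[hat(Z/nZ)], given by its integer
   coefficients c, evaluated at j in Z/nZ. *)
Definition zeval (n : nat) (c : 'I_n -> int) (j : 'I_n) : R[i] :=
  \sum_(k < n) (c k)%:~R * chi k j.

Definition elog (x : R) : \bar R := if x == 0 then -oo%E else (ln x)%:E.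

Definition mahlerZn (n : nat) (c : 'I_n -> int) : \bar R :=
  ((n%:R)^-1%:E * \sum_(j < n) elog (Normc.normc (zeval c j)))%E.

Definition lehmerZn (n : nat) : \bar R :=
  ereal_inf [set mahlerZn c | c in [set c : 'I_n -> int | (0 < mahlerZn c)%E]].

End Lehmer.

(* Main.v *)
Require Import Defs.

From HB Require Import structures.
From mathcomp Require Import all_boot all_order all_algebra.
From mathcomp Require Import all_classical all_reals all_analysis.
From mathcomp Require Import complex.
From mathcomp Require Import lra ring.
Set Implicit Arguments. Unset Strict Implicit. Unset Printing Implicit Defensive.
Import Order.TTheory GRing.Theory Num.Theory.
Local Open Scope ring_scope.

Section S.
Variable R : realType.
Local Open Scope complex_scope.

Definition ee (t : R) : R[i] := (cos t +i* sin t)%C.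

Lemma eeD a b : ee (a + b) = ee a * ee b.
Proof.
rewrite /ee /= cosD sinD; simpc. by congr (_ +i* _); rewrite addrC.
Qed.

Lemma ee0 : ee 0 = 1.
Proof. by rewrite /ee cos0 sin0. Qed.

Lemma eeMn t k : ee (t *+ k) = ee t ^+ k.
Proof.
elim: k => [|k IH]; first by rewrite mulr0n expr0 ee0.
by rewrite mulrS eeD IH exprS.
Qed.

Lemma cos_ne1 (y : R) : 0 < y < pi -> cos (y *+ 2) != 1.
Proof.
move=> hy; rewrite cos_mulr2n.
apply/negP => /eqP h.
have h1 : cos y ^+ 2 = 1.
  move: h; set c := cos y ^+ 2; rewrite mulr2n; lra.
have : `|cos y| == 1 by rewrite -sqr_norm_eq1 h1.
rewrite norm_cos_eq1 => /eqP.
by move: (sin_gt0_pi hy) => /gt_eqF/eqP.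
Qed.
Lemma prim_w n : (0 < n)%N -> n.-primitive_root (ee (2 * pi / n%:R)).
Proof.
move=> n0; have nR : (n%:R : R) != 0 by rewrite pnatr_eq0 -lt0n.
apply/andP; split=> //; apply/forallP => i; rewrite unity_rootE -eeMn.
have [ein|nein] := eqVneq i.+1 n.
  rewrite ein eqb_id -(mulr_natr (2 * pi / n%:R)) divfK // /ee (mulr_natl pi 2) cos2pi sin2pi; exact: eqxx.
have lt : (i.+1 < n)%N by rewrite ltn_neqAle nein ltn_ord.
rewrite eqbF_neg; apply/negP => /eqP; rewrite /ee; case => h _.
pose y : R := pi * (i.+1%:R / n%:R).
have e : (2 * pi / n%:R) *+ i.+1 = y *+ 2.
  by rewrite /y -(mulr_natr (2 * pi / n%:R)) -(mulr_natr (pi * _)); field.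
have hy : 0 < y < pi.
  apply/andP; split.
    by rewrite /y mulr_gt0 ?pi_gt0 // divr_gt0 ?ltr0n.
  rewrite /y -{2}(mulr1 pi) ltr_pM2l ?pi_gt0 // ltr_pdivrMr ?ltr0n ?mul1r ?ltr_nat //.
move: h; rewrite e => h.
by move: (cos_ne1 hy); rewrite h eqxx.
Qed.

Lemma chiE n (k j : 'I_n) : chi R k j = ee (2 * pi / n%:R) ^+ (j * k).
Proof.
by rewrite /chi -eeMn /ee -(mulr_natr (2 * pi / n%:R)) mulrAC natrM.
Qed.

Lemma circ m (c : 'I_m.+1 -> int) :
  \prod_j zeval R c j = ((\det (\matrix_(a, b) c (b - a)))%:~R).
Proof.
set w := ee (2 * pi / m.+1%:R).
have pw : m.+1.-primitive_root w by apply: prim_w.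
set f := fun j : 'I_m.+1 => \sum_k (c k)%:~R * w ^+ (j * k).
have zf : forall j, zeval R c j = f j.
  by move=> j; apply: eq_bigr => k _; rewrite chiE.
rewrite (eq_bigr f); last by move=> j _; exact: zf.
set V := Vandermonde m.+1 (\row_(j < m.+1) w ^+ j).
set C := map_mx (fun x : int => x%:~R : R[i]) (\matrix_(a, b) c (b - a)).
have CV : C *m V = V *m diag_mx (\row_j f j).
  apply/matrixP => a j; rewrite mul_mx_diag !mxE.
  rewrite (reindex_inj (addrI a)) /=.
  rewrite /f mulr_sumr; apply: eq_bigr => k _.
  rewrite !mxE [a + k]addrC addrK.
  have -> : ((k + a)%R : nat) = ((k + a) %% m.+1)%N by [].
  have wj : (w ^+ j) ^+ m.+1 = 1 by rewrite exprAC (prim_expr_order pw) expr1n.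
  rewrite expr_mod // exprD exprM; ring.
have detV : \det V != 0.
  rewrite det_Vandermonde; apply/prodf_neq0 => i _; apply/prodf_neq0 => j ij.
  rewrite !mxE subr_eq0 (eq_prim_root_expr pw) !modn_small //.
  by rewrite eq_sym neq_ltn ij.
have := congr1 determinant CV; rewrite !det_mulmx det_diag det_map_mx.
rewrite [X in _ = X]mulrC => /(mulIf detV) ->; apply: eq_bigr => j _.
by rewrite mxE.
Qed.

Lemma elogM (x y : R) : 0 <= x -> 0 <= y -> elog (x * y) = (elog x + elog y)%E.
Proof.
rewrite /elog => x0 y0.
have [->|xn] := eqVneq x 0; first by rewrite mul0r eqxx.
have [->|yn] := eqVneq y 0; first by rewrite mulr0 eqxx addeC.
rewrite mulf_eq0 (negbTE xn) (negbTE yn) /= lnM // posrE lt_neqAle eq_sym ?xn ?yn //.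
Qed.

Lemma elog_prod (I : finType) (F : I -> R) : (forall i, 0 <= F i) ->
  (\sum_i elog (F i))%E = elog (\prod_i F i).
Proof.
move=> F0.
pose K (a : \bar R) (b : R) := a = elog b /\ 0 <= b.
suff [] : K (\sum_i elog (F i))%E (\prod_i F i) by [].
apply: (big_ind2 K).
- by split; rewrite // /elog oner_eq0 ln1.
- move=> a1 b1 a2 b2 [-> h1] [-> h2]; split; first by rewrite elogM.
  exact: mulr_ge0.
- by move=> i _; split.
Qed.

Lemma normc_int (d : int) : Normc.normc (d%:~R : R[i]) = (`|d|%N)%:R.
Proof.
have -> : (d%:~R : R[i]) = ((d%:~R : R) +i* 0)%C.
  by rewrite complexr0 rmorph_int.
by rewrite /Normc.normc expr0n /= addr0 sqrtr_sqr natr_absz intr_norm.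
Qed.

Lemma mahler_int m (c : 'I_m.+1 -> int) :
  exists N : nat, mahlerZn R c = ((m.+1%:R)^-1%:E * elog N%:R)%E.
Proof.
exists (absz (\det (\matrix_(a, b) c (b - a)))); rewrite /mahlerZn; congr (_ * _)%E.
rewrite elog_prod; last by move=> i; case: (zeval _ _ _) => a b; exact: sqrtr_ge0.
rewrite -normc_int -circ; congr elog.
by rewrite (big_morph _ (@Normc.normcM R) (@Normc.normc1 R)).
Qed.

Definition c0 m (k : 'I_m.+3) : int :=
  (if val k == 0%N then 1 else 0) + (if val k == 1%N then 1 else 0).

Lemma zeval_c0 m (j : 'I_m.+3) :
  zeval R (@c0 m) j = 1 + ee (2 * pi / m.+3%:R) ^+ j.
Proof.
rewrite /zeval big_ord_recl big_ord_recl big1 => [|i _].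
  by rewrite /c0 /= !chiE /= muln0 expr0 addr0 add0r mulr1 mul1r addr0 muln1.
by rewrite /c0 /= mul0r.
Qed.

Lemma prod_c0 m : odd m.+3 -> \prod_(j < m.+3) zeval R (@c0 m) j = 2.
Proof.
move=> hodd.
set w := ee (2 * pi / m.+3%:R).
have pw : m.+3.-primitive_root w by apply: prim_w.
have := congr1 (horner^~ (-1)) (factor_Xn_sub_1 pw).
rewrite horner_prod big_mkord hornerD hornerN hornerXn hornerC.
rewrite -signr_odd hodd expr1.
under eq_bigr do rewrite hornerXsubC -opprD.
rewrite prodrN card_ord -signr_odd hodd expr1 => h.
under eq_bigr do rewrite zeval_c0.
by move: h; rewrite mulN1r -opprD => /oppr_inj.
Qed.

Lemma mahler_c0 m : odd m.+3 ->
  mahlerZn R (@c0 m) = (ln (2 : R) / m.+3%:R)%:E.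
Proof.
move=> hodd; rewrite /mahlerZn.
rewrite elog_prod; last by move=> i; case: (zeval _ _ _) => a b; exact: sqrtr_ge0.
rewrite -(big_morph _ (@Normc.normcM R) (@Normc.normc1 R)) prod_c0 //.
have -> : (2 : R[i]) = ((2 : R) +i* 0)%C by rewrite complexr0 rmorph_nat.
rewrite /Normc.normc expr0n /= addr0 sqrtr_sqr ger0_norm // /elog.
by rewrite pnatr_eq0 /= -EFinM mulrC.
Qed.
End S.

Theorem corollary4p7 (R : realType) (n : nat) :
  (3 <= n)%N -> odd n -> lehmerZn R n = (ln (2 : R) / n%:R)%:E.
Proof.
case: n => [|[|[|m]]] // _ hodd.
have h2 : (0 : R) < ln 2 / m.+3%:R by rewrite divr_gt0 ?ltr0n // ln_gt0 // ltr1n.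
rewrite /lehmerZn; apply/eqP; rewrite eq_le; apply/andP; split.
  apply: ereal_inf_lbound; exists (@c0 m); last exact: mahler_c0.
  by rewrite /= mahler_c0 // lte_fin.
apply: le_ereal_inf_tmp => _ [c /= hc <-].
have [N hN] := mahler_int R c.
rewrite hN in hc *; move: hc; rewrite /elog; clear hN.
case: N => [|[|N]].
  rewrite eqxx mulrNy gtr0_sg ?invr_gt0 ?ltr0n // mul1e //.
rewrite /= oner_eq0 ln1 mule0 ltxx //.
rewrite pnatr_eq0 /= => _; rewrite -EFinM lee_fin [_^-1 * _]mulrC ler_pM2r ?invr_gt0 ?ltr0n //.
by rewrite ler_ln ?posrE ?ltr0n // ler_nat.
Qed.
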